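(* For every integer $m \geq 1$, let $\mathrm{Cay}(\sigma_m)$ and $\mathrm{Cay}(\tau_m)$ be the Cayley graphs (defined in the context) of the Boolean functions $\sigma_m, \tau_m : \mathbb{Z}_2^{2m} \to \mathbb{Z}_2$. Then $\mathrm{Cay}(\sigma_m)$ and $\mathrm{Cay}(\tau_m)$ are isomorphic (as simple graphs) if and only if $m \in \{1,2,3\}$.
   Context: Identify $\mathbb{Z}_2^{2m}$ with the integers $0,\dots,4^m-1$ via binary representation, so each $i \in \mathbb{Z}_2^{2m}$ has a base-4 representation with $m$ digits (each base-4 digit being a consecutive pair of bits). Define $\sigma_m(i)=1$ if and only if the number of base-4 digits of $i$ equal to $1$ is odd, and $\sigma_m(i)=0$ otherwise. Define $\tau_m(i)=1$ if and only if the number of base-4 digits of $i$ equal to $1$ or $2$ is nonzero and the number of base-4 digits of $i$ equal to $1$ is even, and $\tau_m(i)=0$ otherwise. For $f:\mathbb{Z}_2^{2m}\to\mathbb{Z}_2$ with $f(0)=0$, the Cayley graph $\mathrm{Cay}(f)$ is the simple undirected graph with vertex set $\mathbb{Z}_2^{2m}$ in which distinct $i,j$ are adjacent if and only if $f(i+j)=1$ (addition in $\mathbb{Z}_2^{2m}$). *)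

(* Defs.v *)
From mathcomp Require Import all_boot.
Set Implicit Arguments. Unset Strict Implicit. Unset Printing Implicit Defensive.

(* Z_2^{2m}, viewed through base-4 digits: an element is an m-tuple of
   consecutive bit pairs (hi, lo); digit k has value 2*hi + lo. *)
Definition V (m : nat) : finType := {ffun 'I_m -> bool * bool}.

Definition vadd m (x y : V m) : V m :=
  [ffun k => (((x k).1 (+) (y k).1), ((x k).2 (+) (y k).2))].

Definition digit m (x : V m) (k : 'I_m) : nat := 2 * (x k).1 + (x k).2.

Definition ndig m (x : V m) (d : nat) : nat := #|[set k | digit x k == d]|.

Definition sigma m (x : V m) : bool := odd (ndig x 1).

Definition tau m (x : V m) : bool :=
  (#|[set k | (digit x k == 1) || (digit x k == 2)]| != 0) && ~~ odd (ndig x 1).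

Definition cay m (f : V m -> bool) : rel (V m) :=
  fun i j => (i != j) && f (vadd i j).

Definition graph_iso (T : finType) (e1 e2 : rel T) : Prop :=
  exists phi : T -> T, bijective phi /\ forall x y, e2 (phi x) (phi y) = e1 x y.

(* Main.v *)
Require Import Defs.
From mathcomp Require Import all_boot zify.
Set Implicit Arguments. Unset Strict Implicit. Unset Printing Implicit Defensive.

Definition q (p : bool * bool) : bool := ~~ p.1 && p.2.
Definition r (p : bool * bool) : bool := p.1 (+) p.2.

Lemma odd_card (T : finType) (P : pred T) :
  odd #|[set k | P k]| = \big[addb/false]_k P k.
Proof.
rewrite -sum1_card big_mkcond /=.
rewrite (big_morph odd (id1 := false) (id2 := 0) oddD (erefl _)).
by apply: eq_bigr => k _; rewrite inE; case: (P k).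
Qed.

Lemma digit1 m (x : V m) k : (digit x k == 1) = q (x k).
Proof. by rewrite /digit /q; case: (x k) => [[] []]. Qed.
Lemma digit12 m (x : V m) k : ((digit x k == 1) || (digit x k == 2)) = r (x k).
Proof. by rewrite /digit /r; case: (x k) => [[] []]. Qed.

Lemma sigmaE m (x : V m) : sigma x = \big[addb/false]_k q (x k).
Proof.
rewrite /sigma /ndig -odd_card.
have -> : [set k | digit x k == 1] = [set k | q (x k)].
  by apply/setP => k; rewrite !inE digit1.
by [].
Qed.

Lemma tauE m (x : V m) :
  tau x = (\big[orb/false]_k r (x k)) && ~~ \big[addb/false]_k q (x k).
Proof.
rewrite /tau -sigmaE /sigma; congr (_ && _).
rewrite big_orE cards_eq0; apply/idP/existsP.
  by case/set0Pn => k; rewrite inE digit12 => h; exists k.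
by case=> k h; apply/set0Pn; exists k; rewrite inE digit12.
Qed.

Definition bb m (x y : V m) : bool :=
  \big[addb/false]_k (((x k).1 && (y k).2) (+) ((x k).2 && (y k).1)).

Lemma sigmaD m (x y : V m) :
  sigma (vadd x y) = sigma x (+) sigma y (+) bb x y.
Proof.
rewrite !sigmaE /bb -!big_split /=; apply: eq_bigr => k _.
by rewrite ffunE /q; case: (x k) => [[] []]; case: (y k) => [[] []].
Qed.

Lemma bbxx m (x : V m) : bb x x = false.
Proof. by rewrite /bb big1 // => k _; rewrite andbC addbb. Qed.

Lemma vaddK2 m (p a b : V m) : vadd (vadd p a) (vadd p b) = vadd a b.
Proof.
apply/ffunP => k; rewrite !ffunE /=.
by case: (p k) => [[] []]; case: (a k) => [[] []]; case: (b k) => [[] []].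
Qed.

Lemma vaddC m (a b : V m) : vadd a b = vadd b a.
Proof. by apply/ffunP => k; rewrite !ffunE /= addbC [_.2 (+) _]addbC. Qed.

Section Fam.
Variables (m n : nat) (v : 'I_n -> V m).

Definition sumv (c : {ffun 'I_n -> bool}) : V m :=
  [ffun t => (\big[addb/false]_(i | c i) (v i t).1,
              \big[addb/false]_(i | c i) (v i t).2)].

Lemma andb_bigr (a : bool) (P : pred 'I_n) (F : 'I_n -> bool) :
  a && \big[addb/false]_(i | P i) F i = \big[addb/false]_(i | P i) (a && F i).
Proof.
elim/big_rec2: _ => [|i x y _ <-]; first by rewrite andbF.
by case: a; case: (F i); case: y.
Qed.

Lemma bb_sumv (y : V m) c :
  bb y (sumv c) = \big[addb/false]_(i | c i) bb y (v i).
Proof.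
rewrite /bb.
under eq_bigr => t _ do rewrite ffunE /= !andb_bigr -big_split /=.
by rewrite exchange_big.
Qed.
End Fam.

Section Inj.
Variables (m n : nat) (v : 'I_n -> V m).
Hypothesis Hv : forall i j, i != j -> bb (v i) (v j).
Hypothesis Hn : ~~ odd n.

Definition Pc (c : {ffun 'I_n -> bool}) := \big[addb/false]_(i | c i) true.

Lemma big_eqj (c : {ffun 'I_n -> bool}) j :
  \big[addb/false]_(i | c i) (i == j) = c j.
Proof.
rewrite big_mkcond (bigD1 j) //= eqxx big1 ?addbF; first by case: (c j).
by move=> i /negbTE ->; case: (c i).
Qed.

Lemma bbsum j c : bb (v j) (sumv v c) = Pc c (+) c j.
Proof.
rewrite bb_sumv.
rewrite (eq_bigr (fun i => true (+) (i == j))); last first.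
  move=> i _; case: eqP => [->|/eqP h]; first by rewrite bbxx.
  by rewrite Hv // eq_sym.
by rewrite big_split /= big_eqj.
Qed.

Lemma iter_addb k : iter k (addb true) false = odd k.
Proof. by elim: k => //= k ->. Qed.

Lemma sumv_inj : injective (sumv v).
Proof.
move=> c1 c2 E.
have H j : c1 j (+) c2 j = Pc c1 (+) Pc c2.
  have := bbsum j c1; rewrite E bbsum.
  by move: (Pc c1) (Pc c2) (c1 j) (c2 j) => [] [] [] [].
case d: (Pc c1 (+) Pc c2).
  have : Pc c1 (+) Pc c2 = false.
    have E2 : Pc c2 = \big[addb/false]_(i | ~~ c1 i) true.
      apply: eq_bigl => i; have := H i; rewrite d.
      by case: (c1 i); case: (c2 i).
    rewrite E2 /Pc.
    have := bigID (fun i => c1 i) xpredT (fun _ : 'I_n => true).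
    rewrite /= => <-.
    rewrite big_const_ord iter_addb.
    by apply/negbTE.
  by rewrite d.
apply/ffunP => j; have := H j; rewrite d.
by case: (c1 j); case: (c2 j).
Qed.
End Inj.

Lemma no_family m (v : 'I_(2*m+2) -> V m) :
  (forall i j, i != j -> bb (v i) (v j)) -> False.
Proof.
move=> Hv.
have Hn : ~~ odd (2*m+2) by rewrite oddD oddM.
have := leq_card (sumv v) (sumv_inj Hv Hn).
rewrite /V !card_ffun card_prod card_bool !card_ord.
have -> : 2 * m + 2 = 2 * m.+1 by rewrite mulnS addnC.
rewrite expnM /= leqNgt.
by rewrite (_ : 2 ^ 2 = 2 * 2) // ltn_exp2l // ltnSn.
Qed.

Section Big.
Variable m : nat.
Definition fv (b : {ffun 'I_m -> bool}) : V m := [ffun k => (b k, false)].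
Definition b0 : {ffun 'I_m -> bool} := [ffun _ => false].

Lemma fv_inj : injective fv.
Proof.
move=> a b E; apply/ffunP => k.
by have := congr1 (fun x : V m => (x k).1) E; rewrite /= !ffunE.
Qed.

Lemma tau_fv b : tau (fv b) = (b != b0).
Proof.
rewrite tauE (@big1 _ _ _ _ _ _ (fun k => q (fv b k))); last first.
  by move=> k _; rewrite ffunE /q andbF.
rewrite andbT big_orE.
apply/existsP/idP => [[k] | nb].
  by rewrite ffunE /r /= addbF => bk; apply/eqP => E; move: bk; rewrite E ffunE.
case: (pickP b) => [k bk | h]; first by exists k; rewrite ffunE /r /= addbF.
by move: nb; case/eqP; apply/ffunP => k; rewrite ffunE h.
Qed.

Lemma vadd_fv a b : vadd (fv a) (fv b) = fv [ffun k => a k (+) b k].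
Proof. by apply/ffunP => k; rewrite !ffunE. Qed.

Lemma cay_fv a b : cay (@tau m) (fv a) (fv b) = (a != b).
Proof.
rewrite /cay vadd_fv tau_fv (inj_eq fv_inj).
case: eqP => [->|/eqP nab] //=.
apply/eqP => E; move: nab; case/eqP; apply/ffunP => k.
by have := congr1 (fun h : {ffun 'I_m -> bool} => h k) E; rewrite !ffunE; case: (a k); case: (b k).
Qed.

Lemma no_iso : 2*m+2 <= (2^m).-1 -> ~ graph_iso (cay (@sigma m)) (cay (@tau m)).
Proof.
move=> Hm [phi [[g phig gphi] Hphi]].
have Hg x y : cay (@sigma m) (g x) (g y) = cay (@tau m) x y by rewrite -Hphi !gphi.
have Hs a b : a != b -> sigma (vadd (g (fv a)) (g (fv b))).
  by move=> nab; have := Hg (fv a) (fv b); rewrite cay_fv nab /cay; case/andP.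
pose A := [set~ b0].
have HA : 2*m+2 <= #|A| by rewrite cardsC1 card_ffun card_bool card_ord.
pose e (i : 'I_(2*m+2)) := enum_val (A:=mem A) (widen_ord HA i).
have eA i : e i != b0.
  by have := enum_valP (A:=mem A) (widen_ord HA i); rewrite !inE; apply.
have einj : injective e.
  by move=> i j /enum_val_inj /(congr1 val) /= /val_inj.
pose p := g (fv b0).
pose w i := vadd p (g (fv (e i))).
apply: (@no_family m w) => i j nij.
have si : sigma (w i) by apply: Hs; rewrite eq_sym.
have sj : sigma (w j) by apply: Hs; rewrite eq_sym.
have sij : sigma (vadd (w i) (w j)).
  by rewrite /w vaddK2; apply: Hs; rewrite (inj_eq einj).
by move: sij; rewrite sigmaD si sj; case: (bb _ _).
Qed.
End Big.

Definition enc (p : bool * bool) : nat := 2 * p.1 + p.2.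
Definition decode m (n : nat) : V m :=
  [ffun k : 'I_m => (odd (n %/ 4 ^ k %/ 2), odd (n %/ 4 ^ k))].
Arguments decode {m}.
Definition dk (n k : nat) : bool * bool := (odd (n %/ 4 ^ k %/ 2), odd (n %/ 4 ^ k)).
Definition padd (u v : bool * bool) : bool * bool := (u.1 (+) v.1, u.2 (+) v.2).
Definition bp := [:: (false,false); (false,true); (true,false); (true,true)].
Lemma bpP (p : bool * bool) : p \in bp.
Proof. by case: p => [[] []]. Qed.

Definition tbl1 : seq nat := [::0; 2; 1; 3].
Definition key1 (x : V 1) : nat := 1 * enc (x ord0).
Definition phi1 (x : V 1) : V 1 := decode (nth 0 tbl1 (key1 x)).
Definition N1 a := nth 0 tbl1 (1 * enc a).
Definition sT1 a := q a (+) false.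
Definition tT1 a := (r a || false) && ~~ sT1 a.
Definition chk1 := all (fun a => all (fun d => tT1 (padd (dk (N1 a) 0) (dk (N1 d) 0)) == sT1 (padd a d)) bp) bp.
Lemma chk1_ok : chk1.
Proof. by vm_compute. Qed.
Lemma chk1P a d : tT1 (padd (dk (N1 a) 0) (dk (N1 d) 0)) = sT1 (padd a d).
Proof. by apply/eqP; move: chk1_ok; rewrite /chk1; move=> /allP /(_ a (bpP a)) /allP /(_ d (bpP d)). Qed.

Lemma V1_eq (x y : V 1) : x ord0 = y ord0 -> x = y.
Proof.
move=> h0; apply/ffunP => k.
case: k => [[|k] Hk] //.
- by rewrite (_ : Ordinal Hk = ord0) //; apply: val_inj.
Qed.

Lemma phi1K : involutive phi1.
Proof.
move=> x; apply: V1_eq; rewrite /phi1 /key1 !ffunE;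
move: (x ord0) => [a0 a1];
by case: a0; case: a1.
Qed.

Lemma phi1_cay x y : cay (@tau 1) (phi1 x) (phi1 y) = cay (@sigma 1) x y.
Proof.
rewrite /cay (inj_eq (inv_inj phi1K)); congr (_ && _).
rewrite sigmaE tauE !big_ord_recl !big_ord0 /phi1 /key1 !ffunE /=.
exact: (chk1P (x ord0) (y ord0)).
Qed.

Lemma iso1 : graph_iso (cay (@sigma 1)) (cay (@tau 1)).
Proof. exists phi1; split; [exact: inv_bij phi1K | exact: phi1_cay]. Qed.

Definition tbl2 : seq nat := [::0; 2; 1; 3; 11; 9; 10; 8; 7; 5; 6; 4; 12; 14; 13; 15].
Definition key2 (x : V 2) : nat := 1 * enc (x ord0) + 4 * enc (x (lift ord0 ord0)).
Definition phi2 (x : V 2) : V 2 := decode (nth 0 tbl2 (key2 x)).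
Definition N2 a b := nth 0 tbl2 (1 * enc a + 4 * enc b).
Definition sT2 a b := q a (+) (q b (+) false).
Definition tT2 a b := (r a || (r b || false)) && ~~ sT2 a b.
Definition chk2 := all (fun a => all (fun b => all (fun d => all (fun e => tT2 (padd (dk (N2 a b) 0) (dk (N2 d e) 0)) (padd (dk (N2 a b) 1) (dk (N2 d e) 1)) == sT2 (padd a d) (padd b e)) bp) bp) bp) bp.
Lemma chk2_ok : chk2.
Proof. by vm_compute. Qed.
Lemma chk2P a b d e : tT2 (padd (dk (N2 a b) 0) (dk (N2 d e) 0)) (padd (dk (N2 a b) 1) (dk (N2 d e) 1)) = sT2 (padd a d) (padd b e).
Proof. by apply/eqP; move: chk2_ok; rewrite /chk2; move=> /allP /(_ a (bpP a)) /allP /(_ b (bpP b)) /allP /(_ d (bpP d)) /allP /(_ e (bpP e)). Qed.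

Lemma V2_eq (x y : V 2) : x ord0 = y ord0 -> x (lift ord0 ord0) = y (lift ord0 ord0) -> x = y.
Proof.
move=> h0 h1; apply/ffunP => k.
case: k => [[|[|k]] Hk] //.
- by rewrite (_ : Ordinal Hk = ord0) //; apply: val_inj.
- by rewrite (_ : Ordinal Hk = lift ord0 ord0) //; apply: val_inj.
Qed.

Lemma phi2K : involutive phi2.
Proof.
move=> x; apply: V2_eq; rewrite /phi2 /key2 !ffunE;
move: (x ord0) (x (lift ord0 ord0)) => [a0 a1] [b0 b1];
by case: a0; case: a1; case: b0; case: b1.
Qed.

Lemma phi2_cay x y : cay (@tau 2) (phi2 x) (phi2 y) = cay (@sigma 2) x y.
Proof.
rewrite /cay (inj_eq (inv_inj phi2K)); congr (_ && _).
rewrite sigmaE tauE !big_ord_recl !big_ord0 /phi2 /key2 !ffunE /=.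
exact: (chk2P (x ord0) (x (lift ord0 ord0)) (y ord0) (y (lift ord0 ord0))).
Qed.

Lemma iso2 : graph_iso (cay (@sigma 2)) (cay (@tau 2)).
Proof. exists phi2; split; [exact: inv_bij phi2K | exact: phi2_cay]. Qed.

Definition tbl3 : seq nat := [::0; 2; 1; 3; 11; 57; 58; 8; 7; 53; 54; 4; 12; 14; 13; 15; 47; 33; 34; 44; 39; 25; 26; 36; 43; 21; 22; 40; 35; 45; 46; 32; 31; 17; 18; 28; 23; 41; 42; 20; 27; 37; 38; 24; 19; 29; 30; 16; 48; 50; 49; 51; 59; 9; 10; 56; 55; 5; 6; 52; 60; 62; 61; 63].
Definition key3 (x : V 3) : nat := 1 * enc (x ord0) + 4 * enc (x (lift ord0 ord0)) + 16 * enc (x (lift ord0 (lift ord0 ord0))).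
Definition phi3 (x : V 3) : V 3 := decode (nth 0 tbl3 (key3 x)).
Definition N3 a b c := nth 0 tbl3 (1 * enc a + 4 * enc b + 16 * enc c).
Definition sT3 a b c := q a (+) (q b (+) (q c (+) false)).
Definition tT3 a b c := (r a || (r b || (r c || false))) && ~~ sT3 a b c.
Definition chk3 := all (fun a => all (fun b => all (fun c => all (fun d => all (fun e => all (fun f => tT3 (padd (dk (N3 a b c) 0) (dk (N3 d e f) 0)) (padd (dk (N3 a b c) 1) (dk (N3 d e f) 1)) (padd (dk (N3 a b c) 2) (dk (N3 d e f) 2)) == sT3 (padd a d) (padd b e) (padd c f)) bp) bp) bp) bp) bp) bp.
Lemma chk3_ok : chk3.
Proof. by vm_compute. Qed.
Lemma chk3P a b c d e f : tT3 (padd (dk (N3 a b c) 0) (dk (N3 d e f) 0)) (padd (dk (N3 a b c) 1) (dk (N3 d e f) 1)) (padd (dk (N3 a b c) 2) (dk (N3 d e f) 2)) = sT3 (padd a d) (padd b e) (padd c f).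
Proof. by apply/eqP; move: chk3_ok; rewrite /chk3; move=> /allP /(_ a (bpP a)) /allP /(_ b (bpP b)) /allP /(_ c (bpP c)) /allP /(_ d (bpP d)) /allP /(_ e (bpP e)) /allP /(_ f (bpP f)). Qed.

Lemma V3_eq (x y : V 3) : x ord0 = y ord0 -> x (lift ord0 ord0) = y (lift ord0 ord0) -> x (lift ord0 (lift ord0 ord0)) = y (lift ord0 (lift ord0 ord0)) -> x = y.
Proof.
move=> h0 h1 h2; apply/ffunP => k.
case: k => [[|[|[|k]]] Hk] //.
- by rewrite (_ : Ordinal Hk = ord0) //; apply: val_inj.
- by rewrite (_ : Ordinal Hk = lift ord0 ord0) //; apply: val_inj.
- by rewrite (_ : Ordinal Hk = lift ord0 (lift ord0 ord0)) //; apply: val_inj.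
Qed.

Lemma phi3K : involutive phi3.
Proof.
move=> x; apply: V3_eq; rewrite /phi3 /key3 !ffunE;
move: (x ord0) (x (lift ord0 ord0)) (x (lift ord0 (lift ord0 ord0))) => [a0 a1] [b0 b1] [c0 c1];
by case: a0; case: a1; case: b0; case: b1; case: c0; case: c1.
Qed.

Lemma phi3_cay x y : cay (@tau 3) (phi3 x) (phi3 y) = cay (@sigma 3) x y.
Proof.
rewrite /cay (inj_eq (inv_inj phi3K)); congr (_ && _).
rewrite sigmaE tauE !big_ord_recl !big_ord0 /phi3 /key3 !ffunE /=.
exact: (chk3P (x ord0) (x (lift ord0 ord0)) (x (lift ord0 (lift ord0 ord0))) (y ord0) (y (lift ord0 ord0)) (y (lift ord0 (lift ord0 ord0)))).
Qed.

Lemma iso3 : graph_iso (cay (@sigma 3)) (cay (@tau 3)).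
Proof. exists phi3; split; [exact: inv_bij phi3K | exact: phi3_cay]. Qed.

Lemma pow_bound n : 2 * (n + 4) + 2 <= (2 ^ (n + 4)).-1.
Proof.
suff : 2 * (n + 4) + 2 < 2 ^ (n + 4) by lia.
elim: n => // n IH.
rewrite addSn expnS. lia.
Qed.

Unset Implicit Arguments.

Theorem theorem1 (m : nat) (hm : 1 <= m) :
  graph_iso (cay (@sigma m)) (cay (@tau m)) <-> m \in [:: 1; 2; 3].
Proof.
split.
  case: m hm => [|[|[|[|m]]]] // _ Hiso.
  by exfalso; apply: (no_iso (m := (m + 4))) (pow_bound m) _; rewrite addn4.
rewrite !inE => /or3P [] /eqP ->; [exact: iso1 | exact: iso2 | exact: iso3].
Qed.
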